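(* If $(S,K,I)$ is a split graph, then the factor graph $\Phi(S)$ cannot contain an induced path $v_1v_2v_3v_4$ with $\sigma_{23}=1$.
   Context: A split graph $(S,K,I)$ is a graph $S$ together with a fixed partition $V(S)=K\dot\cup I$, where $K$ is a clique and $I$ is an independent set. For a vertex $v_i$ of $S$, $N_i$ denotes its open neighborhood in $S$ and $d_i=|N_i|$; $\eta_{uv}=|N_u\cap N_v|$. The factor graph $\Phi(S)$ is the loopless multigraph with vertex set $I$ in which, for distinct $u,v\in I$, there is one edge joining $u$ and $v$ for each 2-switch of $S$ acting on $u$ and $v$ (a 2-switch replaces edges $ab,cd$ with $ac,bd$ when $ab,cd\in E(S)$ and $ac,bd\notin E(S)$); equivalently, the multiplicity of $uv$ is $\sigma_{uv}=(d_u-\eta_{uv})(d_v-\eta_{uv})$, and $u,v$ are adjacent iff $\sigma_{uv}>0$; $\sigma_{ij}$ denotes $\sigma_{v_iv_j}$. An induced path in $\Phi(S)$ consists of distinct vertices with consecutive ones adjacent and no other pair adjacent (multiplicities ignored). *)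

(* Defs.v *)
From mathcomp Require Import all_boot.
Set Implicit Arguments. Unset Strict Implicit. Unset Printing Implicit Defensive.

Definition simple_graph (T : finType) (e : rel T) : Prop :=
  symmetric e /\ irreflexive e.

Definition split_graph (T : finType) (e : rel T) (K I : {set T}) : Prop :=
  [/\ simple_graph e,
      K :&: I = set0,
      K :|: I = setT,
      {in K &, forall x y, x != y -> e x y}
    & {in I &, forall x y, ~~ e x y}].

Section FactorGraph.
Variables (T : finType) (e : rel T).

Definition nbhd (v : T) : {set T} := [set w | e v w].
Definition deg (v : T) : nat := #|nbhd v|.
Definition eta (u v : T) : nat := #|nbhd u :&: nbhd v|.

(* multiplicity of the edge uv in the factor graph Phi(S) *)
Definition sigma (u v : T) : nat := (deg u - eta u v) * (deg v - eta u v).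

Definition phi_adj (I : {set T}) (u v : T) : bool :=
  [&& u \in I, v \in I, u != v & 0 < sigma u v].

Definition phi_induced_P4 (I : {set T}) (v1 v2 v3 v4 : T) : Prop :=
  [/\ [&& v1 \in I, v2 \in I, v3 \in I & v4 \in I],
      uniq [:: v1; v2; v3; v4],
      [&& phi_adj I v1 v2, phi_adj I v2 v3 & phi_adj I v3 v4]
    & [&& ~~ phi_adj I v1 v3, ~~ phi_adj I v1 v4 & ~~ phi_adj I v2 v4]].

End FactorGraph.

(* Main.v *)
Require Import Defs.
From mathcomp Require Import all_boot.
Set Implicit Arguments.

Lemma sigmaE (T : finType) (e : rel T) u v :
  sigma e u v = #|nbhd e u :\: nbhd e v| * #|nbhd e v :\: nbhd e u|.
Proof.
rewrite /sigma /deg /eta.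
rewrite -{1}(cardsID (nbhd e v) (nbhd e u)) addKn.
by rewrite setIC -{1}(cardsID (nbhd e u) (nbhd e v)) addKn.
Qed.

Lemma adjE (T : finType) (e : rel T) (I : {set T}) u v :
  u \in I -> v \in I -> u != v ->
  phi_adj e I u v = ~~ (nbhd e u \subset nbhd e v) && ~~ (nbhd e v \subset nbhd e u).
Proof.
move=> Hu Hv Huv; rewrite /phi_adj Hu Hv Huv /= sigmaE lt0n muln_eq0 negb_or.
by rewrite !cards_eq0 !setD_eq0.
Qed.

Lemma side (T : finType) (A1 A2 A3 : {set T}) a b :
  A2 :\: A3 = [set a] -> A3 :\: A2 = [set b] ->
  (A1 \subset A3) || (A3 \subset A1) -> ~~ (A1 \subset A2) -> ~~ (A2 \subset A1) ->
  (b \in A1) && (a \notin A1).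
Proof.
move=> Ea Eb /orP [] H n12 n21.
- have /subsetPn [x x1 x2] := n12.
  have : x \in A3 :\: A2 by rewrite inE x2 (subsetP H x x1).
  rewrite Eb inE => /eqP <-; rewrite x1 /=.
  apply/negP => a1.
  have : a \in A2 :\: A3 by rewrite Ea set11.
  by rewrite inE (subsetP H a a1).
- have /subsetPn [x x2 x1] := n21.
  have b3 : b \in A3 :\: A2 by rewrite Eb set11.
  move: (b3); rewrite inE => /andP [_ b3'].
  rewrite (subsetP H b b3') /=.
  have x3 : x \notin A3 by apply/negP => x3; rewrite (subsetP H x x3) in x1.
  have : x \in A2 :\: A3 by rewrite inE x2 x3.
  by rewrite Ea inE => /eqP <-.
Qed.

Theorem theorem4p1 (T : finType) (e : rel T) (K I : {set T}) :
  split_graph e K I ->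
  ~ (exists v1 v2 v3 v4 : T,
       phi_induced_P4 e I v1 v2 v3 v4 /\ sigma e v2 v3 = 1).
Proof.
move=> _ [v1 [v2 [v3 [v4 [[HI Hu Hadj Hn] Hs]]]]].
move/and4P: HI => [i1 i2 i3 i4].
move: Hu; rewrite /= !inE !negb_or => /and4P [/and3P [d12 d13 d14] /andP [d23 d24] d34 _].
move/and3P: Hadj => [a12 a23 a34].
move/and3P: Hn => [n13 n14 n24].
rewrite adjE // in a12; rewrite adjE // in a34.
rewrite adjE // negb_and !negbK in n13.
rewrite adjE // negb_and !negbK in n14.
rewrite adjE // negb_and !negbK in n24.
move: Hs; rewrite sigmaE => /eqP; rewrite muln_eq1 => /andP [/cards1P [a Ea] /cards1P [b Eb]].
move/andP: a12 => [p12 p21]; move/andP: a34 => [p34 p43].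
have /andP [b1 a1] := side (nbhd e v1) Ea Eb n13 p12 p21.
have /andP [a4 b4] := side (nbhd e v4) Eb Ea (etrans (orbC _ _) n24) p43 p34.
- case/orP: n14 => H.
  + by rewrite (subsetP H b b1) in b4.
  + by rewrite (subsetP H a a4) in a1.
Qed.
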